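(* Let $G=(V,v,E)$ be a directed graph with node set $V=\{1,\dots,n\}$, target node $v\in V$ and edge set $E$, and let $Z$ be a set of ordered pairs of nodes (hidden edges) with $Z\cap E=\emptyset$. For $\mathbf{y}\in\{0,1\}^{Z}$ with support $Y=\{(i,j)\in Z: y_{(i,j)}=1\}$, let $\mathcal{FR}(\mathbf{y})$ denote the expected first return time to $v$ of the PageRank random walk on the graph $(V,E\cup Y)$. Let $\mathcal{Y}$ be a set of constraints on $\mathbf{y}$ with $\mathcal{Y}\cap\{0,1\}^{Z}\neq\emptyset$. For disjoint $S,N\subseteq Z$ let $$\gamma(S,N)=\min\{\mathcal{FR}(\mathbf{y}): y_{(i,j)}=1\ \forall (i,j)\in S,\ y_{(i,j)}=0\ \forall (i,j)\in N,\ \mathbf{y}\in\{0,1\}^{Z}\}.$$ Let $\bar{\mathbf{y}}\in\mathcal{Y}\cap\{0,1\}^{Z}$ with support $\bar Y$. Then the inequality $$\theta\ \ge\ \mathcal{FR}(\bar{\mathbf{y}})+\sum_{(i,j)\in\bar Y}\min\{0,\gamma(\emptyset,\{(i,j)\})-\mathcal{FR}(\bar{\mathbf{y}})\}(1-y_{(i,j)})+\sum_{(i,j)\in Z\setminus\bar Y}\min\{0,\gamma(\{(i,j)\},\emptyset)-\mathcal{FR}(\bar{\mathbf{y}})\}\,y_{(i,j)}$$ is valid, i.e. it is satisfied by every pair $(\theta,\mathbf{y})$ with $\mathbf{y}\in\mathcal{Y}\cap\{0,1\}^{Z}$, $\theta\in\mathbb{R}_+$ and $\theta\ge\mathcal{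FR}(\mathbf{y})$.
   Context: The PageRank value of $v$ equals the reciprocal of the expected first return time to $v$ (expected number of steps for the PageRank random walk, i.e. the random walk defined by the PageRank/Google matrix with fixed damping and teleportation as in Csáji–Jungers–Blondel, started at $v$ to return to $v$). In particular $\mathcal{FR}(\mathbf{y})\ge 0$ for all $\mathbf{y}$. The optimization problem considered is $\min\{\mathcal{FR}(\mathbf{y}):\mathbf{y}\in\mathcal{Y}\cap\{0,1\}^{Z}\}$, written in epigraph form with a variable $\theta\in\mathbb{R}_+$ satisfying $\theta\ge\mathcal{FR}(\mathbf{y})$. *)

(* Defs.v *)
From HB Require Import structures.
From mathcomp Require Import all_boot all_order all_algebra.
From mathcomp Require Import all_classical all_reals all_analysis.
Set Implicit Arguments. Unset Strict Implicit. Unset Printing Implicit Defensive.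
Import Order.TTheory GRing.Theory Num.Theory.
Local Open Scope ring_scope.

Section PageRank.
Variables (R : realType) (n : nat).

Definition outdeg (E : {set 'I_n * 'I_n}) (i : 'I_n) : nat :=
  #|[set j | (i, j) \in E]|.

(* row-stochastic matrix of the simple random walk, dangling nodes jump
   uniformly (Csaji--Jungers--Blondel) *)
Definition Smx (E : {set 'I_n * 'I_n}) : 'M[R]_n :=
  \matrix_(i, j) (if outdeg E i == 0%N then n%:R^-1
                  else ((i, j) \in E)%:R / (outdeg E i)%:R).

Definition google (c : R) (z : 'I_n -> R) (E : {set 'I_n * 'I_n}) : 'M[R]_n :=
  \matrix_(i, j) (c * Smx E i j + (1 - c) * z j).

Definition taboo (P : 'M[R]_n) (v : 'I_n) : 'M[R]_n :=
  \matrix_(i, j) (if j == v then 0 else P i j).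

(* probability that the walk started at v first returns to v at step k >= 1 *)
Definition first_return_prob (P : 'M[R]_n) (v : 'I_n) (k : nat) : R :=
  ((taboo P v ^+ k.-1) *m P) v v.

Definition FR (c : R) (z : 'I_n -> R) (v : 'I_n) (E : {set 'I_n * 'I_n}) : R :=
  limn (fun N : nat => \sum_(1 <= k < N) (k%:R * first_return_prob (google c z E) v k)).

(* gamma(S,N): min of FR(y) over binary y on Z (encoded by its support Y \subset Z)
   with y = 1 on S and y = 0 on N *)
Definition feasibleSN (Z S N : {set 'I_n * 'I_n}) : set {set 'I_n * 'I_n} :=
  fun Y => [/\ Y \subset Z, S \subset Y & [disjoint Y & N]].

Definition gammaSN (c : R) (z : 'I_n -> R) (v : 'I_n) (E Z S N : {set 'I_n * 'I_n}) : R :=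
  inf ((fun Y => FR c z v (E :|: Y)) @` feasibleSN Z S N)%classic.

End PageRank.

(* Main.v *)
Require Import Defs.
From HB Require Import structures.
From mathcomp Require Import all_boot all_order all_algebra.
From mathcomp Require Import all_classical all_reals all_analysis.
Import Order.TTheory GRing.Theory Num.Theory.
Local Open Scope ring_scope.

Lemma gamma_le (R : realType) (n : nat) (c : R) (z : 'I_n -> R) (v : 'I_n)
    (E Z S N Y : {set 'I_n * 'I_n}) :
  feasibleSN Z S N Y -> gammaSN c z v E Z S N <= FR c z v (E :|: Y).
Proof.
move=> hY; rewrite /gammaSN; apply: ge_inf; last by exists Y.
exists (- \sum_(X : {set 'I_n * 'I_n}) `|FR c z v (E :|: X)|).
move=> x [X _ <-]; rewrite lerNl.
apply: le_trans (ler_norm _) _; rewrite normrN.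
rewrite (bigD1 X) //= lerDl; apply: sumr_ge0 => *; exact: normr_ge0.
Qed.

Theorem theorem1 (R : realType) (n : nat) (c : R) (z : 'I_n -> R) (v : 'I_n)
    (E Z : {set 'I_n * 'I_n}) (Ycal : {set 'I_n * 'I_n} -> Prop) :
  0 < c < 1 ->
  (forall j, 0 < z j) -> \sum_j z j = 1 ->
  Z :&: E = finset.set0 ->
  (exists Y : {set 'I_n * 'I_n}, Y \subset Z /\ Ycal Y) ->
  forall Ybar : {set 'I_n * 'I_n}, Ybar \subset Z -> Ycal Ybar ->
  forall (theta : R) (Y : {set 'I_n * 'I_n}),
    Y \subset Z -> Ycal Y -> 0 <= theta -> FR c z v (E :|: Y) <= theta ->
    FR c z v (E :|: Ybar)
    + \sum_(e in Ybar)
        Num.min 0 (gammaSN c z v E Z finset.set0 [set e] - FR c z v (E :|: Ybar))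
          * (1 - (e \in Y)%:R)
    + \sum_(e in Z :\: Ybar)
        Num.min 0 (gammaSN c z v E Z [set e] finset.set0 - FR c z v (E :|: Ybar))
          * (e \in Y)%:R
    <= theta.
Proof.
move=> _ _ _ _ _ Ybar sYb _ theta Y sY _ _ hth.
set F := FR c z v (E :|: Ybar).
set s1 := \sum_(e in Ybar) _.
set s2 := \sum_(e in Z :\: Ybar) _.
have t1 : forall e, Num.min 0 (gammaSN c z v E Z finset.set0 [set e] - F)
          * (1 - (e \in Y)%:R) <= 0.
  move=> e; apply: mulr_le0_ge0; first by rewrite ge_min lexx.
  by case: (e \in Y); rewrite /= ?subrr ?subr0.
have t2 : forall e, Num.min 0 (gammaSN c z v E Z [set e] finset.set0 - F)
          * (e \in Y)%:R <= 0.
  move=> e; apply: mulr_le0_ge0; first by rewrite ge_min lexx.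
  by case: (e \in Y).
have s1le : s1 <= 0 by apply: sumr_le0 => e _; exact: t1.
have s2le : s2 <= 0 by apply: sumr_le0 => e _; exact: t2.
have [eqY|neY] := eqVneq Y Ybar.
  apply: le_trans hth; rewrite eqY -addrA.
  apply: (@le_trans _ _ (F + 0)); last by rewrite addr0.
  by apply: lerD => //; rewrite -(addr0 0); apply: lerD.
have H :
   (exists e, e \in Ybar /\ e \notin Y) \/ (exists e, e \in Y /\ e \notin Ybar).
  case: (boolP (Ybar \subset Y)) => h.
      right; have : ~~ (Y \subset Ybar).
        by apply: contra neY => h'; rewrite finset.eqEsubset h' h.
      by case/subsetPn => e ? ?; exists e.
  by left; case/subsetPn: h => e ? ?; exists e.
case: H => [[e [eYb eY]]|[e [eY eYb]]].
- have g : gammaSN c z v E Z finset.set0 [set e] <= FR c z v (E :|: Y).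
    apply: gamma_le; rewrite /feasibleSN; split => //; first exact: finset.sub0set.
    by rewrite disjoint_sym disjoints1.
  have : s1 <= FR c z v (E :|: Y) - F.
    rewrite /s1 (bigD1 e) //= (negbTE eY) subr0 mulr1.
    rewrite -[X in _ <= X]addr0; apply: lerD.
      by rewrite ge_min; apply/orP; right; rewrite lerD2r.
    by apply: sumr_le0 => *; exact: t1.
  move=> h1; apply: le_trans hth.
  have -> : FR c z v (E :|: Y) = F + (FR c z v (E :|: Y) - F) + 0
    by rewrite addr0 addrC subrK.
  apply: lerD; [apply: lerD; [exact: lexx | exact: h1] | exact: s2le].
- have eZ : e \in Z :\: Ybar by rewrite finset.in_setD eYb (fintype.subsetP sY).
  have g : gammaSN c z v E Z [set e] finset.set0 <= FR c z v (E :|: Y).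
    apply: gamma_le; rewrite /feasibleSN; split => //; first by rewrite finset.sub1set.
    by rewrite finset.disjoints_subset finset.setC0 finset.subsetT.
  have : s2 <= FR c z v (E :|: Y) - F.
    rewrite /s2 (bigD1 e) //= eY mulr1.
    rewrite -[X in _ <= X]addr0; apply: lerD.
      by rewrite ge_min; apply/orP; right; rewrite lerD2r.
    by apply: sumr_le0 => *; exact: t2.
  move=> h2; apply: le_trans hth.
  have -> : FR c z v (E :|: Y) = F + 0 + (FR c z v (E :|: Y) - F)
    by rewrite addr0 addrC subrK.
  apply: lerD; [apply: lerD; [exact: lexx | exact: s1le] | exact: h2].
Qed.
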